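(* Let $(X,d,\mu)$ be a coarse median space with parameters $\rho,H$. Then for every $n\geqslant1$ there exists a constant $D_n$ depending on $\rho,H$ (and $n$) such that for all $a,b,c,e_1,\ldots,e_n\in X$, $$\mu\big(a,b,\mu(e_1,\ldots,e_n;c)\big)\sim_{D_n}\mu\big(\mu(a,b,e_1),\ldots,\mu(a,b,e_n);\mu(a,b,c)\big).$$
   Context: Write $x\sim_s y$ if $d(x,y)\leqslant s$. A coarse median space is a triple $(X,d,\mu)$ with $(X,d)$ a metric space and $\mu\colon X^3\to X$ satisfying: (M1) $\mu(a,a,b)=a$; (M2) $\mu(a_1,a_2,a_3)$ is invariant under permutations of its arguments; (C1) there is an affine $\rho(t)=Kt+H_0$ with $d(\mu(a,b,c),\mu(a',b',c'))\leqslant\rho(d(a,a')+d(b,b')+d(c,c'))$ for all points; (C2) there is $H\colon\mathbb N\to[0,\infty)$ such that for every finite $A\subseteq X$ with $1\leqslant|A|\leqslant p$ there are a finite median algebra $(\Pi,\mu_\Pi)$ and maps $\pi\colon A\to\Pi$, $\lambda\colon\Pi\to X$ with $\lambda\mu_\Pi(x,y,z)\sim_{H(p)}\mu(\lambda x,\lambda y,\lambda z)$ for all $x,y,z\in\Pi$ and $\lambda\pi a\sim_{H(p)}a$ for all $a\in A$. Functions $\rho,H$ as in (C1),(C2) are called parameters. (A median algebra is a set with a ternary operation $m$ satisfying $m(a,a,b)=a$, full symmetry, and $m(m(a,b,c),b,d)=m(a,b,m(c,b,d))$.) The iterated coarse median is $\mu(x_1;b)=x_1$ and $\mu(x_1,\ldots,x_{k+1};b)=\mu(\mu(x_1,\ldots,x_k;b),x_{k+1},b)$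 for $k\geqslant1$. *)

(* Defs.v *)
From Stdlib Require Import Reals List.
Import ListNotations.
Open Scope R_scope.

Definition is_metric {X : Type} (d : X -> X -> R) : Prop :=
  (forall x y, 0 <= d x y) /\
  (forall x y, d x y = 0 <-> x = y) /\
  (forall x y, d x y = d y x) /\
  (forall x y z, d x z <= d x y + d y z).

Definition close {X : Type} (d : X -> X -> R) (s : R) (x y : X) : Prop :=
  d x y <= s.

Definition finite_type (P : Type) : Prop := exists l : list P, forall x, In x l.

Definition is_median_algebra {P : Type} (m : P -> P -> P -> P) : Prop :=
  (forall a b, m a a b = a) /\
  (forall a b c, m a b c = m b a c /\ m a b c = m a c b) /\
  (forall a b c d, m (m a b c) b d = m a b (m c b d)).

(* coarse median space with parameters rho(t) = K t + H0 and H *)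
Definition is_coarse_median {X : Type} (d : X -> X -> R) (mu : X -> X -> X -> X)
  (K H0 : R) (H : nat -> R) : Prop :=
  is_metric d /\
  (forall a b, mu a a b = a) /\
  (forall a b c, mu a b c = mu b a c /\ mu a b c = mu a c b) /\
  (forall a b c a' b' c',
              d (mu a b c) (mu a' b' c') <= K * (d a a' + d b b' + d c c') + H0) /\
  (forall p, 0 <= H p) /\
  (forall (p : nat) (A : list X),
              NoDup A -> (1 <= length A)%nat -> (length A <= p)%nat ->
              exists (P : Type) (m : P -> P -> P -> P),
                finite_type P /\ is_median_algebra m /\
                exists (pi : X -> P) (lam : P -> X),
                  (forall x y z, close d (H p) (lam (m x y z)) (mu (lam x) (lam y) (lam z))) /\
                  (forall a, In a A -> close d (H p) (lam (pi a)) a)).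

(* iterated coarse median: mu(x1;b) = x1,
   mu(x1,...,x_{k+1};b) = mu(mu(x1,...,xk;b), x_{k+1}, b).
   iter_mu mu x1 [x2;...;xk] b = mu(x1,...,xk;b). *)
Definition iter_mu {X : Type} (mu : X -> X -> X -> X) (x1 : X) (xs : list X) (b : X) : X :=
  fold_left (fun acc x => mu acc x b) xs x1.

(* Main.v *)
Require Import Defs.
From Stdlib Require Import Reals Lra Lia List Classical.
Import ListNotations.
Open Scope R_scope.


Lemma MJ_ {P} {m : P -> P -> P -> P} (Hm : is_median_algebra m) s t : m s s t = s.
Proof. destruct Hm as [h _]. apply h. Qed.
Lemma A2_ {P} {m : P -> P -> P -> P} (Hm : is_median_algebra m) s B u C :
  m (m s B u) B C = m s B (m u B C).
Proof. destruct Hm as [_ [_ h]]. apply h. Qed.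
Lemma S1_ {P} {m : P -> P -> P -> P} (Hm : is_median_algebra m) a b c : m a b c = m b a c.
Proof. destruct Hm as [_ [h _]]. apply h. Qed.
Lemma S2_ {P} {m : P -> P -> P -> P} (Hm : is_median_algebra m) a b c : m a b c = m a c b.
Proof. destruct Hm as [_ [h _]]. apply h. Qed.
Lemma S3_ {P} {m : P -> P -> P -> P} (Hm : is_median_algebra m) a b c : m a b c = m b c a.
Proof. rewrite (S1_ Hm), (S2_ Hm). reflexivity. Qed.
Lemma S4_ {P} {m : P -> P -> P -> P} (Hm : is_median_algebra m) a b c : m a b c = m c a b.
Proof. rewrite (S2_ Hm), (S1_ Hm). reflexivity. Qed.
Lemma S5_ {P} {m : P -> P -> P -> P} (Hm : is_median_algebra m) a b c : m a b c = m c b a.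
Proof. rewrite (S1_ Hm), (S2_ Hm), (S1_ Hm). reflexivity. Qed.

Ltac pe Hm := solve [ reflexivity |
  match goal with |- ?m _ _ _ = ?m _ _ _ =>
   first [ apply f_equal3; pe Hm
         | etransitivity; [apply (S1_ Hm)|]; apply f_equal3; pe Hm
         | etransitivity; [apply (S2_ Hm)|]; apply f_equal3; pe Hm
         | etransitivity; [apply (S3_ Hm)|]; apply f_equal3; pe Hm
         | etransitivity; [apply (S4_ Hm)|]; apply f_equal3; pe Hm
         | etransitivity; [apply (S5_ Hm)|]; apply f_equal3; pe Hm ] end ].

Ltac prep Hm :=
  pose proof (MJ_ Hm) as MJ; pose proof (A2_ Hm) as A2;
  pose proof (S1_ Hm) as P1; pose proof (S2_ Hm) as P2; pose proof (S3_ Hm) as P3;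
  pose proof (S4_ Hm) as P4; pose proof (S5_ Hm) as P5.

Lemma EE_ {P} {m : P -> P -> P -> P} (Hm : is_median_algebra m) p q r :
  m p q r = m (m p q r) p q.
Proof.
  prep Hm.
  transitivity (m r q (m p q p)).
  - rewrite (P2 p q p), MJ. pe Hm.
  - rewrite <- A2. pe Hm.
Qed.

Lemma Q1_ {P} {m : P -> P -> P -> P} (Hm : is_median_algebra m) a p u x (H1 : u = (m a u x)) :
  (m p (m a p x) u) = (m a p x).
Proof.
  pose proof (MJ_ Hm) as MJ; pose proof (A2_ Hm) as A2; pose proof (EE_ Hm) as EE.
  transitivity (m p u (m a p x)); [pe Hm|].
  transitivity (m p (m a p x) (m a u x)); [transitivity (m p u (m a p x)); [pe Hm|transitivity (m p (m a u x) (m a p x)); [exact (f_equal (fun hh => (m p hh (m a p x))) H1)|pe Hm]]|].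
  transitivity (m p (m a u x) (m a p (m a p x))); [transitivity (m p (m a p x) (m a u x)); [pe Hm|transitivity (m p (m (m a p x) a p) (m a u x)); [exact (f_equal (fun hh => (m p hh (m a u x))) (EE a p x))|pe Hm]]|].
  transitivity (m p (m a p x) (m a p (m a u x))); [transitivity (m (m a u x) p (m a p (m a p x))); [pe Hm|transitivity (m (m (m a u x) p a) p (m a p x)); [exact (f_equal (fun hh => hh) (eq_sym (A2 (m a u x) p a (m a p x))))|pe Hm]]|].
  transitivity (m p (m a p x) (m a u (m a p x))); [transitivity (m p (m a p x) (m p a (m x a u))); [pe Hm|transitivity (m p (m a p x) (m (m p a x) a u)); [exact (f_equal (fun hh => (m p (m a p x) hh)) (eq_sym (A2 p a x u)))|pe Hm]]|].
  transitivity (m u (m a p x) (m a p (m a p x))); [transitivity (m p (m a p x) (m a (m a p x) u)); [pe Hm|transitivity (m (m p (m a p x) a) (m a p x) u); [exact (f_equal (fun hh => hh) (eq_sym (A2 p (m a p x) a u)))|pe Hm]]|].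
  transitivity (m u (m a p x) (m a p x)); [transitivity (m u (m a p x) (m (m a p x) a p)); [pe Hm|transitivity (m u (m a p x) (m a p x)); [exact (f_equal (fun hh => (m u (m a p x) hh)) (eq_sym (EE a p x)))|pe Hm]]|].
  transitivity (m a p x); [transitivity (m (m a p x) (m a p x) u); [pe Hm|transitivity (m a p x); [exact (f_equal (fun hh => hh) (MJ (m a p x) u))|pe Hm]]|].
  pe Hm.
Qed.

Lemma Gate_ {P} {m : P -> P -> P -> P} (Hm : is_median_algebra m) a b z w (H1 : w = (m a w b)) :
  (m z (m a b z) w) = (m a b z).
Proof.
  pose proof (MJ_ Hm) as MJ; pose proof (A2_ Hm) as A2; pose proof (EE_ Hm) as EE.
  transitivity (m w z (m a b z)); [pe Hm|].
  transitivity (m z (m a b w) (m a b z)); [transitivity (m w z (m a b z)); [pe Hm|transitivity (m (m a w b) z (m a b z)); [exact (f_equal (fun hh => (m hh z (m a b z))) H1)|pe Hm]]|].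
  transitivity (m z (m a b w) (m a z (m a b z))); [transitivity (m z (m a b w) (m a z b)); [pe Hm|transitivity (m z (m a b w) (m (m a z b) a z)); [exact (f_equal (fun hh => (m z (m a b w) hh)) (EE a z b))|pe Hm]]|].
  transitivity (m z (m a b z) (m a z (m a b w))); [transitivity (m (m a b w) z (m a z (m a b z))); [pe Hm|transitivity (m (m (m a b w) z a) z (m a b z)); [exact (f_equal (fun hh => hh) (eq_sym (A2 (m a b w) z a (m a b z))))|pe Hm]]|].
  transitivity (m z (m a b z) (m a w (m a b z))); [transitivity (m z (m a b z) (m z a (m b a w))); [pe Hm|transitivity (m z (m a b z) (m (m z a b) a w)); [exact (f_equal (fun hh => (m z (m a b z) hh)) (eq_sym (A2 z a b w)))|pe Hm]]|].
  transitivity (m w (m a b z) (m a z (m a b z))); [transitivity (m z (m a b z) (m a (m a b z) w)); [pe Hm|transitivity (m (m z (m a b z) a) (m a b z) w); [exact (f_equal (fun hh => hh) (eq_sym (A2 z (m a b z) a w)))|pe Hm]]|].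
  transitivity (m w (m a b z) (m a b z)); [transitivity (m w (m a b z) (m (m a z b) a z)); [pe Hm|transitivity (m w (m a b z) (m a z b)); [exact (f_equal (fun hh => (m w (m a b z) hh)) (eq_sym (EE a z b)))|pe Hm]]|].
  transitivity (m a b z); [transitivity (m (m a b z) (m a b z) w); [pe Hm|transitivity (m a b z); [exact (f_equal (fun hh => hh) (MJ (m a b z) w))|pe Hm]]|].
  pe Hm.
Qed.

Lemma Uniq_ {P} {m : P -> P -> P -> P} (Hm : is_median_algebra m) a b z p (H1 : p = (m a p b)) (H2 : p = (m a p z)) (H3 : p = (m b p z)) :
  p = (m a b z).
Proof.
  pose proof (MJ_ Hm) as MJ; pose proof (A2_ Hm) as A2; pose proof (EE_ Hm) as EE.
  transitivity p; [pe Hm|].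
  transitivity (m a b p); [transitivity p; [pe Hm|transitivity (m a p b); [exact (f_equal (fun hh => hh) H1)|pe Hm]]|].
  transitivity (m a b (m a p z)); [transitivity (m a b p); [pe Hm|transitivity (m a b (m a p z)); [exact (f_equal (fun hh => (m a b hh)) H2)|pe Hm]]|].
  transitivity (m a p (m a b z)); [transitivity (m b a (m z a p)); [pe Hm|transitivity (m (m b a z) a p); [exact (f_equal (fun hh => hh) (eq_sym (A2 b a z p)))|pe Hm]]|].
  transitivity (m a (m a b p) (m a b z)); [transitivity (m a p (m a b z)); [pe Hm|transitivity (m a (m a p b) (m a b z)); [exact (f_equal (fun hh => (m a hh (m a b z))) H1)|pe Hm]]|].
  transitivity (m a (m a b z) (m a b (m b p z))); [transitivity (m a (m a b p) (m a b z)); [pe Hm|transitivity (m a (m a b (m b p z)) (m a b z)); [exact (f_equal (fun hh => (m a (m a b hh) (m a b z))) H3)|pe Hm]]|].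
  transitivity (m a (m a b z) (m b p (m a b z))); [transitivity (m a (m a b z) (m a b (m z b p))); [pe Hm|transitivity (m a (m a b z) (m (m a b z) b p)); [exact (f_equal (fun hh => (m a (m a b z) hh)) (eq_sym (A2 a b z p)))|pe Hm]]|].
  transitivity (m p (m a b z) (m a b (m a b z))); [transitivity (m a (m a b z) (m b (m a b z) p)); [pe Hm|transitivity (m (m a (m a b z) b) (m a b z) p); [exact (f_equal (fun hh => hh) (eq_sym (A2 a (m a b z) b p)))|pe Hm]]|].
  transitivity (m p (m a b z) (m a b z)); [transitivity (m p (m a b z) (m (m a b z) a b)); [pe Hm|transitivity (m p (m a b z) (m a b z)); [exact (f_equal (fun hh => (m p (m a b z) hh)) (eq_sym (EE a b z)))|pe Hm]]|].
  transitivity (m a b z); [transitivity (m (m a b z) (m a b z) p); [pe Hm|transitivity (m a b z); [exact (f_equal (fun hh => hh) (MJ (m a b z) p))|pe Hm]]|].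
  pe Hm.
Qed.


Definition le {P} (m : P -> P -> P -> P) a u v := m a u v = u.

Lemma Q_ {P} {m : P -> P -> P -> P} (Hm : is_median_algebra m) a u x p q
  (H1 : u = m a u x) (H2 : p = m u p q) (H3 : q = m x q p) : m a p q = p.
Proof.
  pose proof (MJ_ Hm) as MJ; pose proof (A2_ Hm) as A2.
  pose proof (Q1_ Hm a p u x H1) as HQ.
  assert (E1 : m q p x = q) by (rewrite H3 at 2; pe Hm).
  rewrite <- E1. transitivity (m (m a p x) p q).
  { rewrite (A2 a p x q). pe Hm. }
  transitivity (m (m (m a p x) p u) p q).
  { f_equal. rewrite <- HQ at 1. pe Hm. }
  rewrite A2. assert (E2 : m u p q = p) by (symmetry; exact H2).
  rewrite E2. transitivity (m p p (m a p x)); [pe Hm| apply MJ].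
Qed.

Lemma Mono_ {P} {m : P -> P -> P -> P} (Hm : is_median_algebra m) a u x y c
  (H1 : le m a u x) : le m a (m u y c) (m x y c).
Proof.
  pose proof (EE_ Hm) as EE.
  unfold le in *.
  assert (Hq : m y (m x y c) c = m x y c).
  { transitivity (m y c x); [| pe Hm]. rewrite (EE y c x). pe Hm. }
  assert (Hp : m y (m u y c) c = m u y c).
  { transitivity (m y c u); [| pe Hm]. rewrite (EE y c u). pe Hm. }
  pose proof (Gate_ Hm y c u (m x y c) (eq_sym Hq)) as G1.
  pose proof (Gate_ Hm y c x (m u y c) (eq_sym Hp)) as G2.
  assert (G1' : m u y c = m u (m u y c) (m x y c)).
  { transitivity (m y c u); [pe Hm|]. rewrite <- G1. pe Hm. }
  assert (G2' : m x y c = m x (m x y c) (m u y c)).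
  { transitivity (m y c x); [pe Hm|]. rewrite <- G2. pe Hm. }
  exact (Q_ Hm a u x (m u y c) (m x y c) (eq_sym H1) G1' G2').
Qed.

Lemma le_trans_ {P} {m : P -> P -> P -> P} (Hm : is_median_algebra m) a u v w :
  le m a u v -> le m a v w -> le m a u w.
Proof.
  pose proof (A2_ Hm) as A2.
  unfold le; intros H1 H2.
  rewrite <- H1 at 1.
  transitivity (m (m u a v) a w); [pe Hm|]. rewrite A2.
  assert (m v a w = v) by (rewrite <- H2 at 2; pe Hm). rewrite H.
  rewrite <- H1 at 2. pe Hm.
Qed.

Lemma le_perm_ {P} {m : P -> P -> P -> P} a u u' v v' :
  u = u' -> v = v' -> le m a u v -> le m a u' v'.
Proof. intros -> ->; auto. Qed.

Lemma meet_le_ {P} {m : P -> P -> P -> P} (Hm : is_median_algebra m) a b x :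
  le m a (m a b x) x /\ le m a (m a b x) b.
Proof.
  pose proof (EE_ Hm) as EE. unfold le. split.
  - transitivity (m (m a x b) a x); [pe Hm| rewrite <- (EE a x b); pe Hm].
  - transitivity (m (m a b x) a b); [pe Hm| rewrite <- (EE a b x); pe Hm].
Qed.

Lemma s_le_t {P} {m : P -> P -> P -> P} (Hm : is_median_algebra m) a b x y c :
  le m a (m (m a b x) (m a b y) (m a b c)) (m x y c).
Proof.
  destruct (meet_le_ Hm a b x) as [Hx _].
  destruct (meet_le_ Hm a b y) as [Hy _].
  destruct (meet_le_ Hm a b c) as [Hc _].
  apply (le_trans_ Hm a _ (m x (m a b y) (m a b c))).
  { apply (Mono_ Hm a _ _ (m a b y) (m a b c) Hx). }
  apply (le_trans_ Hm a _ (m x y (m a b c))).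
  { pose proof (Mono_ Hm a _ _ x (m a b c) Hy) as K.
    eapply le_perm_; [| | exact K]; pe Hm. }
  pose proof (Mono_ Hm a _ _ x y Hc) as K.
  eapply le_perm_; [| | exact K]; pe Hm.
Qed.

Lemma s_le_b {P} {m : P -> P -> P -> P} (Hm : is_median_algebra m) a b x y c :
  le m a (m (m a b x) (m a b y) (m a b c)) b.
Proof.
  pose proof (MJ_ Hm) as MJ.
  destruct (meet_le_ Hm a b x) as [_ Hx].
  destruct (meet_le_ Hm a b y) as [_ Hy].
  apply (le_trans_ Hm a _ (m b (m a b y) (m a b c))).
  { apply (Mono_ Hm a _ _ (m a b y) (m a b c) Hx). }
  pose proof (Mono_ Hm a _ _ b (m a b c) Hy) as K.
  eapply le_perm_; [| | exact K]. pe Hm. transitivity (m b b (m a b c)); [pe Hm| apply MJ].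
Qed.

Lemma distr_ {P} {m : P -> P -> P -> P} (Hm : is_median_algebra m) a b x y c :
  m a b (m x y c) = m (m a b x) (m a b y) (m a b c).
Proof.
  symmetry. apply (Uniq_ Hm).
  - pose proof (s_le_b Hm a b x y c) as K. unfold le in K. rewrite K. reflexivity.
  - pose proof (s_le_t Hm a b x y c) as K. unfold le in K. rewrite K. reflexivity.
  - pose proof (s_le_t Hm b a x y c) as K. unfold le in K.
    assert (E : forall z, m b a z = m a b z) by (intro; pe Hm).
    rewrite !E in K. rewrite K. reflexivity.
Qed.


Lemma nodup_ex {X : Type} (l : list X) :
  exists l', NoDup l' /\ (forall z, In z l -> In z l') /\ (length l' <= length l)%nat.
Proof.
  induction l as [|x l IH].
  - exists []. split; [constructor|split; [intros z []|simpl; lia]].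
  - destruct IH as [l' [N [I L]]].
    destruct (classic (In x l')) as [Hin|Hin].
    + exists l'. split; [exact N|split; [|simpl; lia]].
      intros z [<-|Hz]; auto.
    + exists (x :: l'). split; [constructor; auto|split; [|simpl; lia]].
      intros z [<-|Hz]; simpl; auto.
Qed.

Definition e1c (K H0 h : R) := Rabs K * (3 * h) + H0 + h.
Definition C5 (K H0 h : R) :=
  (Rabs K * (h + h + e1c K H0 h) + H0 + h) + (Rabs K * (e1c K H0 h + e1c K H0 h + e1c K H0 h) + H0 + h).

Lemma C1abs {X : Type} (d : X -> X -> R) mu K H0 H :
  is_coarse_median d mu K H0 H ->
  forall a b c a' b' c', d (mu a b c) (mu a' b' c') <= Rabs K * (d a a' + d b b' + d c c') + H0.
Proof.
  intros [[Hd0 _] [_ [_ [HC1 _]]]] a b c a' b' c'.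
  eapply Rle_trans; [apply HC1|].
  apply Rplus_le_compat_r. apply Rmult_le_compat_r.
  - pose proof (Hd0 a a'); pose proof (Hd0 b b'); pose proof (Hd0 c c'); lra.
  - apply Rle_abs.
Qed.

Lemma coarse_distr {X : Type} (d : X -> X -> R) mu K H0 H :
  is_coarse_median d mu K H0 H ->
  forall a b x y c,
  d (mu a b (mu x y c)) (mu (mu a b x) (mu a b y) (mu a b c)) <= C5 K H0 (H 5%nat).
Proof.
  intros HX a b x y c.
  pose proof (C1abs d mu K H0 H HX) as HC1.
  destruct HX as [[Hd0 [Hdeq [Hsym Htri]]] [_ [_ [_ [HH HC2]]]]].
  destruct (nodup_ex [a;b;x;y;c]) as [A [NA [IA LA]]].
  assert (Hlen1 : (1 <= length A)%nat).
  { destruct A; [|simpl; lia]. exfalso. apply (IA a). simpl; auto. }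
  destruct (HC2 5%nat A NA Hlen1 ltac:(simpl in LA; lia)) as
    [P [m [_ [Hm [pi [lam [Hlm Hlp]]]]]]].
  set (h := H 5%nat) in *.
  set (kk := Rabs K) in *.
  assert (kk0 : 0 <= kk) by apply Rabs_pos.
  assert (h0 : 0 <= h) by apply HH.
  assert (base : forall z, In z A -> d z (lam (pi z)) <= h).
  { intros z Hz. rewrite Hsym. apply Hlp; auto. }
  assert (step : forall u1 u2 u3 w1 w2 w3 f1 f2 f3,
            d u1 (lam w1) <= f1 -> d u2 (lam w2) <= f2 -> d u3 (lam w3) <= f3 ->
            d (mu u1 u2 u3) (lam (m w1 w2 w3)) <= kk * (f1 + f2 + f3) + H0 + h).
  { intros. eapply Rle_trans; [apply (Htri _ (mu (lam w1) (lam w2) (lam w3)))|].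
    assert (d (mu (lam w1) (lam w2) (lam w3)) (lam (m w1 w2 w3)) <= h).
    { rewrite Hsym. apply Hlm. }
    pose proof (HC1 u1 u2 u3 (lam w1) (lam w2) (lam w3)).
    assert (kk * (d u1 (lam w1) + d u2 (lam w2) + d u3 (lam w3)) <= kk * (f1 + f2 + f3)).
    { apply Rmult_le_compat_l; lra. }
    lra. }
  assert (Ba : d a (lam (pi a)) <= h) by (apply base, IA; simpl; tauto).
  assert (Bb : d b (lam (pi b)) <= h) by (apply base, IA; simpl; tauto).
  assert (Bx : d x (lam (pi x)) <= h) by (apply base, IA; simpl; tauto).
  assert (By : d y (lam (pi y)) <= h) by (apply base, IA; simpl; tauto).
  assert (Bc : d c (lam (pi c)) <= h) by (apply base, IA; simpl; tauto).
  pose proof (step _ _ _ _ _ _ _ _ _ Bx By Bc) as Exyc.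
  pose proof (step _ _ _ _ _ _ _ _ _ Ba Bb Bx) as Eabx.
  pose proof (step _ _ _ _ _ _ _ _ _ Ba Bb By) as Eaby.
  pose proof (step _ _ _ _ _ _ _ _ _ Ba Bb Bc) as Eabc.
  pose proof (step _ _ _ _ _ _ _ _ _ Ba Bb Exyc) as EL.
  pose proof (step _ _ _ _ _ _ _ _ _ Eabx Eaby Eabc) as ER.
  rewrite <- (distr_ Hm) in ER.
  eapply Rle_trans; [apply (Htri _ (lam (m (pi a) (pi b) (m (pi x) (pi y) (pi c)))))|].
  rewrite (Hsym (lam _)).
  unfold C5, e1c. fold kk h. lra.
Qed.


Fixpoint Dseq (K H0 : R) (H : nat -> R) (k : nat) : R :=
  match k with
  | O => 0
  | S k' => C5 K H0 (H 5%nat) + Rabs K * Dseq K H0 H k' + H0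
  end.

Lemma iter_claim {X : Type} (d : X -> X -> R) mu K H0 H :
  is_coarse_median d mu K H0 H ->
  forall a b c e1 es,
  d (mu a b (iter_mu mu e1 es c))
    (iter_mu mu (mu a b e1) (map (fun e => mu a b e) es) (mu a b c)) <= Dseq K H0 H (length es).
Proof.
  intros HX a b c e1 es.
  pose proof (C1abs d mu K H0 H HX) as HC1.
  pose proof (coarse_distr d mu K H0 H HX) as HD.
  destruct HX as [[Hd0 [Hdeq [Hsym Htri]]] _].
  induction es as [|e es IH] using rev_ind.
  - simpl. unfold iter_mu. simpl. right. apply Hdeq. reflexivity.
  - unfold iter_mu in *. rewrite map_app, !fold_left_app. simpl.
    rewrite length_app. simpl. rewrite Nat.add_1_r. simpl.
    set (M := fold_left (fun acc x => mu acc x c) es e1) in *.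
    set (R' := fold_left (fun acc x => mu acc x (mu a b c)) (map (fun e0 => mu a b e0) es) (mu a b e1)) in *.
    eapply Rle_trans; [apply (Htri _ (mu (mu a b M) (mu a b e) (mu a b c)))|].
    pose proof (HD a b M e c) as H1.
    pose proof (HC1 (mu a b M) (mu a b e) (mu a b c) R' (mu a b e) (mu a b c)) as H2.
    rewrite (proj2 (Hdeq (mu a b e) (mu a b e)) eq_refl) in H2.
    rewrite (proj2 (Hdeq (mu a b c) (mu a b c)) eq_refl) in H2.
    assert (Rabs K * (d (mu a b M) R' + 0 + 0) <= Rabs K * Dseq K H0 H (length es)).
    { apply Rmult_le_compat_l; [apply Rabs_pos| lra]. }
    lra.
Qed.

Theorem lemma2p19 :
  forall (K H0 : R) (H : nat -> R) (n : nat), (1 <= n)%nat ->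
  exists Dn : R,
    forall (X : Type) (d : X -> X -> R) (mu : X -> X -> X -> X),
      is_coarse_median d mu K H0 H ->
      forall (a b c e1 : X) (es : list X), length (e1 :: es) = n ->
        close d Dn (mu a b (iter_mu mu e1 es c))
                   (iter_mu mu (mu a b e1) (map (fun e => mu a b e) es) (mu a b c)).
Proof.
  intros K H0 H n Hn.
  exists (Dseq K H0 H (n - 1)).
  intros X d mu HX a b c e1 es Hl.
  unfold close. simpl in Hl.
  replace (n - 1)%nat with (length es) by lia.
  apply (iter_claim d mu K H0 H HX).
Qed.
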